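(* Let $\mathcal{CS}$ be a variant closed constant specification for the basic system and $\mathcal{CS}(\mathbf V)$ its extension to $\mathit{Fml}_J(\mathbf V)$. For every basic formula $\varphi\in\mathit{Fml}_J$, if $\vdash_{\mathcal{CS}(\mathbf V)}\varphi$ then $\vdash_{\mathcal{CS}}\varphi$.
   Context: Syntax of FOLPb: terms $t::=p_i\mid c\mid t\cdot t\mid t+t\mid !t\mid\mathsf b(t)\mid\mathsf{gen}_x(t)$; formulas $Px_1\dots x_n\mid\bot\mid\varphi\to\varphi\mid\forall x\varphi\mid t{:}_X\varphi$ with $X$ a finite set of individual variables, $fv(t{:}_X\psi)=X$; $\mathit{Fml}_J$ is the set of these (basic) formulas. Axiom schemes: A1 classical first-order; A2 $t{:}_{Xy}\varphi\to t{:}_X\varphi$ ($y$ not free in $\varphi$); A3 $t{:}_X\varphi\to t{:}_{Xy}\varphi$; B1 $t{:}_X\varphi\to\varphi$; B2 $t{:}_X(\varphi\to\psi)\to(s{:}_X\varphi\to[t\cdot s]{:}_X\psi)$; B3 $t{:}_X\varphi\to[t+s]{:}_X\varphi$, $s{:}_X\varphi\to[t+s]{:}_X\varphi$; B4 $t{:}_X\varphi\to!t{:}_Xt{:}_X\varphi$; B5 $t{:}_X\varphi\to\mathsf{gen}_x(t){:}_X\forall x\varphi$ ($x\notin X$); Bb $\forall y\,t{:}_{Xy}\varphi(y)\to\mathsf b(t){:}_X\forall y\varphi(y)$; rules modus ponens and generalization. A constant specification $\mathcal{CS}$ is a set of $c{:}\psi$ with $\psi$ an axiom; $\vdash_{\mathcal{CS}}$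 is provability with $\mathcal{CS}$ added. $\mathcal{CS}$ is variant closed if $c{:}\varphi\in\mathcal{CS}\iff c{:}\psi\in\mathcal{CS}$ whenever $\varphi,\psi$ differ by a one-to-one onto renaming of free individual variables. Henkin language: $\mathbf V$ is a countable set of new witness variables, which may occur free (as predicate arguments and in subscript sets) but are never quantified nor used as $\mathsf{gen}$ subscripts; $\mathit{Fml}_J(\mathbf V)$ is the set of such Henkin formulas. $\mathcal{CS}(\mathbf V)$ is the set of all $c{:}\psi$ with $c{:}\varphi\in\mathcal{CS}$ and $\psi$ obtained from $\varphi$ by replacing some free basic variables by distinct witness variables. $\vdash_{\mathcal{CS}(\mathbf V)}$ is provability over $\mathit{Fml}_J(\mathbf V)$ with the same axiom schemes and rules and $\mathcal{CS}(\mathbf V)$ as additional axioms. *)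

(* Defs.v *)
From Stdlib Require Import List Arith Bool Sorted.
Import ListNotations.

(* BV n : basic individual variable x_n;  WV n : witness variable v_n *)
Inductive var : Type := BV (n : nat) | WV (n : nat).

Definition var_eqb (a b : var) : bool :=
  match a, b with
  | BV m, BV n => Nat.eqb m n
  | WV m, WV n => Nat.eqb m n
  | _, _ => false
  end.

Definition inb (v : var) (X : list var) : bool := existsb (var_eqb v) X.

(* a fixed strict linear order on variables, used to represent finite sets of
   variables canonically as strictly increasing lists *)
Definition vcode (v : var) : nat :=
  match v with BV n => 2 * n | WV n => 2 * n + 1 end.

Fixpoint vins (y : var) (X : list var) : list var :=
  match X with
  | [] => [y]
  | z :: Z => if Nat.ltb (vcode y) (vcode z) then y :: z :: Z
              else if Nat.eqb (vcode y) (vcode z) then z :: Z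
              else z :: vins y Z
  end.

Definition sortset (l : list var) : list var := fold_right vins [] l.

Definition wfset (X : list var) : Prop :=
  Sorted (fun a b => vcode a < vcode b) X.

(* JVar i = p_i, JConst c = c, JApp = ·, JSum = +, JBang = !, JB = b,
   JGen x t = gen_x(t) with x a basic variable (witnesses never occur here) *)
Inductive jterm : Type :=
| JVar (i : nat)
| JConst (c : nat)
| JApp (s t : jterm)
| JSum (s t : jterm)
| JBang (t : jterm)
| JB (t : jterm)
| JGen (x : nat) (t : jterm).

(* Pred P xs : P x1 ... xn ;  All x φ quantifies the basic variable x_x only;
   Just t X φ : t :_X φ, X a finite set of variables (canonical list). *)
Inductive form : Type :=
| Pred (P : nat) (args : list var)
| Bot
| Imp (φ ψ : form)
| All (x : nat) (φ : form)
| Just (t : jterm) (X : list var) (φ : form).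

Fixpoint fv (φ : form) : list var :=
  match φ with
  | Pred _ l => l
  | Bot => []
  | Imp a b => fv a ++ fv b
  | All x a => filter (fun v => negb (var_eqb v (BV x))) (fv a)
  | Just _ X _ => X
  end.

Fixpoint wf (φ : form) : Prop :=
  match φ with
  | Pred _ _ | Bot => True
  | Imp a b => wf a /\ wf b
  | All _ a => wf a
  | Just _ X a => wfset X /\ wf a
  end.

Definition is_basic_var (v : var) : Prop :=
  match v with BV _ => True | WV _ => False end.

Fixpoint basic (φ : form) : Prop :=
  match φ with
  | Pred _ l => Forall is_basic_var l
  | Bot => True
  | Imp a b => basic a /\ basic b
  | All _ a => basic a
  | Just _ X a => Forall is_basic_var X /\ basic a
  end.

Definition FmlJV (φ : form) : Prop := wf φ.
Definition FmlJ (φ : form) : Prop := wf φ /\ basic φ.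

Definition upd (f : var -> var) (x : nat) : var -> var :=
  fun v => if var_eqb v (BV x) then v else f v.

Fixpoint ren (f : var -> var) (φ : form) : form :=
  match φ with
  | Pred P l => Pred P (map f l)
  | Bot => Bot
  | Imp a b => Imp (ren f a) (ren f b)
  | All x a => All x (ren (upd f x) a)
  | Just t X a =>
      Just t (sortset (map f X)) (ren (fun v => if inb v X then f v else v) a)
  end.

(* the replacement f is free (capture-avoiding) for φ *)
Fixpoint ren_ok (f : var -> var) (φ : form) : Prop :=
  match φ with
  | Pred _ _ | Bot => True
  | Imp a b => ren_ok f a /\ ren_ok f b
  | All x a => ren_ok (upd f x) a /\
               (forall v, In v (fv (All x a)) -> f v <> BV x)
  | Just t X a =>
      ren_ok (fun v => if inb v X then f v else v) a /\
      (forall v w, In v X -> In v (fv a) -> In w (fv a) -> ~ In w X ->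
                   f v <> w)
  end.

Definition sub1 (x : nat) (y : var) : var -> var :=
  fun v => if var_eqb v (BV x) then y else v.

(* propositional tautology instances: valid under every assignment of truth
   values to the non-propositional (atomic, quantified, justification)
   subformulas *)
Fixpoint peval (val : form -> bool) (φ : form) : bool :=
  match φ with
  | Bot => false
  | Imp a b => implb (peval val a) (peval val b)
  | _ => val φ
  end.

Definition taut (φ : form) : Prop := forall val, peval val φ = true.

Inductive axiom : form -> Prop :=
| ax_taut φ : taut φ -> axiom φ
| ax_inst x φ y : ren_ok (sub1 x y) φ -> axiom (Imp (All x φ) (ren (sub1 x y) φ))
| ax_allimp x φ ψ : ~ In (BV x) (fv φ) ->
    axiom (Imp (All x (Imp φ ψ)) (Imp φ (All x ψ)))
| ax_A2 t X y φ : ~ In y X -> ~ In y (fv φ) ->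
    axiom (Imp (Just t (vins y X) φ) (Just t X φ))
| ax_A3 t X y φ : ~ In y X ->
    axiom (Imp (Just t X φ) (Just t (vins y X) φ))
| ax_B1 t X φ : axiom (Imp (Just t X φ) φ)
| ax_B2 t s X φ ψ :
    axiom (Imp (Just t X (Imp φ ψ)) (Imp (Just s X φ) (Just (JApp t s) X ψ)))
| ax_B3l t s X φ : axiom (Imp (Just t X φ) (Just (JSum t s) X φ))
| ax_B3r t s X φ : axiom (Imp (Just s X φ) (Just (JSum t s) X φ))
| ax_B4 t X φ : axiom (Imp (Just t X φ) (Just (JBang t) X (Just t X φ)))
| ax_B5 t X x φ : ~ In (BV x) X ->
    axiom (Imp (Just t X φ) (Just (JGen x t) X (All x φ)))
| ax_Bb t X y φ : ~ In (BV y) X ->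
    axiom (Imp (All y (Just t (vins (BV y) X) φ)) (Just (JB t) X (All y φ))).

(* a constant specification: CS c ψ means c:ψ ∈ CS; here c:ψ is c:_∅ ψ *)
Definition cs_formula (c : nat) (ψ : form) : form := Just (JConst c) [] ψ.

Definition is_CS (CS : nat -> form -> Prop) : Prop :=
  forall c ψ, CS c ψ -> FmlJ ψ /\ axiom ψ.

Definition lift_ren (σ : nat -> nat) : var -> var :=
  fun v => match v with BV n => BV (σ n) | WV n => WV n end.

Definition variant (φ ψ : form) : Prop :=
  exists σ : nat -> nat,
    (exists σ', (forall n, σ' (σ n) = n) /\ (forall n, σ (σ' n) = n)) /\
    ren_ok (lift_ren σ) φ /\ ψ = ren (lift_ren σ) φ.

Definition variant_closed (CS : nat -> form -> Prop) : Prop :=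
  forall c φ ψ, variant φ ψ -> (CS c φ <-> CS c ψ).

(* CS(V): replace some free basic variables (those selected by P) by distinct
   witness variables (BV n ↦ WV (τ n), τ injective) *)
Definition wit_ren (P : nat -> bool) (τ : nat -> nat) : var -> var :=
  fun v => match v with
           | BV n => if P n then WV (τ n) else BV n
           | WV n => WV n
           end.

Definition CSV (CS : nat -> form -> Prop) (c : nat) (ψ : form) : Prop :=
  exists φ (P : nat -> bool) (τ : nat -> nat),
    CS c φ /\ (forall m n, τ m = τ n -> m = n) /\
    ren_ok (wit_ren P τ) φ /\ ψ = ren (wit_ren P τ) φ.

Inductive prov (L : form -> Prop) (CS : nat -> form -> Prop) : form -> Prop :=
| pr_ax φ : L φ -> axiom φ -> prov L CS φ
| pr_cs c ψ : CS c ψ -> L (cs_formula c ψ) -> prov L CS (cs_formula c ψ)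
| pr_mp φ ψ : prov L CS (Imp φ ψ) -> prov L CS φ -> prov L CS ψ
| pr_gen x φ : prov L CS φ -> prov L CS (All x φ).

Definition provCS (CS : nat -> form -> Prop) (φ : form) : Prop :=
  prov FmlJ CS φ.
Definition provCSV (CS : nat -> form -> Prop) (φ : form) : Prop :=
  prov FmlJV (CSV CS) φ.

(* Main.v *)
Require Import Defs.
From Stdlib Require Import List Arith Bool Sorted Lia FunctionalExtensionality.
Import ListNotations.

Definition R (a b : var) : Prop := vcode a < vcode b.

Lemma vcode_inj a b : vcode a = vcode b -> a = b.
Proof. destruct a, b; simpl; intro; f_equal; lia. Qed.

Lemma var_eqb_spec a b : var_eqb a b = true <-> a = b.
Proof.
  destruct a, b; simpl; split; intro H; try discriminate;
  try (apply Nat.eqb_eq in H; subst; reflexivity);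
  try (inversion H; subst; apply Nat.eqb_refl).
Qed.

Lemma inb_In v X : inb v X = true <-> In v X.
Proof.
  unfold inb. rewrite existsb_exists. split.
  - intros [x [Hx He]]. apply var_eqb_spec in He. subst; auto.
  - intros H. exists v. split; auto. apply var_eqb_spec; auto.
Qed.

Lemma In_vins v y X : In v (vins y X) <-> v = y \/ In v X.
Proof.
  induction X as [|z Z IH]; simpl.
  - split; intros [H|H]; auto.
  - destruct (Nat.ltb (vcode y) (vcode z)) eqn:E1; simpl.
    + split; intros [H|H]; auto.
    + destruct (Nat.eqb (vcode y) (vcode z)) eqn:E2; simpl.
      * apply Nat.eqb_eq in E2. apply vcode_inj in E2. subst.
        split; intros H; [auto|destruct H as [H|H]; auto].
      * rewrite IH. split; intros [H|H]; auto; destruct H; auto.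
Qed.

Lemma vins_sorted y X : StronglySorted R X -> StronglySorted R (vins y X).
Proof.
  induction X as [|z Z IH]; simpl; intro H.
  - constructor; constructor.
  - inversion H; subst.
    destruct (Nat.ltb (vcode y) (vcode z)) eqn:E1.
    + apply Nat.ltb_lt in E1. constructor; auto. constructor; [exact E1|].
      rewrite Forall_forall in *. intros w Hw. specialize (H3 w Hw). unfold R in *. lia.
    + destruct (Nat.eqb (vcode y) (vcode z)) eqn:E2; auto.
      apply Nat.ltb_ge in E1. apply Nat.eqb_neq in E2.
      constructor; auto. rewrite Forall_forall in *. intros w Hw.
      apply In_vins in Hw. destruct Hw as [->|Hw]; auto. unfold R; lia.
Qed.

Lemma sortset_sorted l : StronglySorted R (sortset l).
Proof. induction l; simpl. constructor. apply vins_sorted; auto. Qed.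

Lemma In_sortset v l : In v (sortset l) <-> In v l.
Proof. induction l; simpl. tauto. rewrite In_vins, IHl. firstorder. Qed.

Lemma sorted_unique l1 l2 : StronglySorted R l1 -> StronglySorted R l2 ->
  (forall v, In v l1 <-> In v l2) -> l1 = l2.
Proof.
  revert l2; induction l1 as [|a l1 IH]; intros [|b l2] H1 H2 Hm.
  - reflexivity.
  - exfalso. apply (Hm b). left; auto.
  - exfalso. apply (Hm a). left; auto.
  - inversion H1; subst. inversion H2; subst.
    assert (a = b).
    { destruct (proj1 (Hm a) (or_introl eq_refl)) as [|Ha]; auto.
      destruct (proj2 (Hm b) (or_introl eq_refl)) as [|Hb]; auto.
      rewrite Forall_forall in *. specialize (H4 _ Hb). specialize (H6 _ Ha).
      unfold R in *; lia. }
    subst. f_equal. apply IH; auto. intro v. split; intro Hv.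
    + destruct (proj1 (Hm v) (or_intror Hv)) as [->|]; auto.
      rewrite Forall_forall in H4. specialize (H4 _ Hv). unfold R in H4; lia.
    + destruct (proj2 (Hm v) (or_intror Hv)) as [->|]; auto.
      rewrite Forall_forall in H6. specialize (H6 _ Hv). unfold R in H6; lia.
Qed.

Lemma sortset_eq l1 l2 : (forall v, In v l1 <-> In v l2) -> sortset l1 = sortset l2.
Proof.
  intro H. apply sorted_unique; try apply sortset_sorted.
  intro v. rewrite !In_sortset. apply H.
Qed.

Lemma wfset_sortset X : wfset X -> sortset X = X.
Proof.
  intro H. apply sorted_unique; [apply sortset_sorted| |].
  - apply Sorted_StronglySorted; auto. intros a b c; unfold R; lia.
  - intro v; apply In_sortset.
Qed.
Definition th (N : nat) (v : var) : var :=
  match v with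
  | BV n => if Nat.ltb n N then BV n else WV (n - N)
  | WV n => BV (N + n)
  end.

Lemma th_inv N v : th N (th N v) = v.
Proof.
  destruct v as [n|n]; simpl.
  - destruct (Nat.ltb n N) eqn:E; simpl; [rewrite E; auto|].
    apply Nat.ltb_ge in E. f_equal; lia.
  - destruct (Nat.ltb (N+n) N) eqn:E. apply Nat.ltb_lt in E; lia. f_equal; lia.
Qed.

Lemma th_BV N x : x < N -> th N (BV x) = BV x.
Proof. intro H; simpl. apply Nat.ltb_lt in H. rewrite H; auto. Qed.

Lemma th_eq N v w : th N v = w <-> v = th N w.
Proof. split; intro H; subst; rewrite th_inv; auto. Qed.

Fixpoint Th (N : nat) (φ : form) : form :=
  match φ with
  | Pred P l => Pred P (map (th N) l)
  | Bot => Bot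
  | Imp a b => Imp (Th N a) (Th N b)
  | All x a => All x (Th N a)
  | Just t X a => Just t (sortset (map (th N) X)) (Th N a)
  end.

Definition bnd N v := match v with BV n => n < N | WV _ => True end.

Fixpoint good (N : nat) (φ : form) : Prop :=
  match φ with
  | Pred _ l => Forall (bnd N) l
  | Bot => True
  | Imp a b => good N a /\ good N b
  | All x a => x < N /\ good N a
  | Just _ X a => Forall (bnd N) X /\ good N a
  end.

Lemma in_map_th N v l : In v (map (th N) l) <-> In (th N v) l.
Proof.
  rewrite in_map_iff. split.
  - intros [x [<- Hx]]. rewrite th_inv; auto.
  - intros H. exists (th N v). rewrite th_inv; auto.
Qed.

Lemma in_Thset N v X : In v (sortset (map (th N) X)) <-> In (th N v) X.
Proof. rewrite In_sortset. apply in_map_th. Qed.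

Lemma inb_Thset N v X : inb v (sortset (map (th N) X)) = inb (th N v) X.
Proof.
  destruct (inb (th N v) X) eqn:E.
  - apply inb_In. apply in_Thset. apply inb_In; auto.
  - destruct (inb v (sortset (map (th N) X))) eqn:E2; auto.
    apply inb_In, in_Thset, inb_In in E2. congruence.
Qed.

Lemma var_eqb_th N x v : x < N -> var_eqb (th N v) (BV x) = var_eqb v (BV x).
Proof.
  intro Hx.
  destruct (var_eqb v (BV x)) eqn:E.
  - apply var_eqb_spec in E. subst. rewrite th_BV; auto. apply var_eqb_spec; auto.
  - destruct (var_eqb (th N v) (BV x)) eqn:E2; auto.
    apply var_eqb_spec, th_eq in E2. rewrite th_BV in E2; auto.
    subst. rewrite (proj2 (var_eqb_spec _ _) eq_refl) in E. discriminate.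
Qed.

Lemma fv_Th N φ v : good N φ -> (In v (fv (Th N φ)) <-> In (th N v) (fv φ)).
Proof.
  revert v; induction φ as [P l| |a IHa b IHb|x a IH|t X a IH]; intros v Hg; simpl in *.
  - apply in_map_th.
  - tauto.
  - destruct Hg. rewrite !in_app_iff, IHa, IHb; tauto.
  - destruct Hg as [Hx Hg]. rewrite !filter_In, IH, var_eqb_th; tauto.
  - apply in_Thset.
Qed.

Lemma fv_bnd N φ v : good N φ -> In v (fv φ) -> bnd N v.
Proof.
  revert v; induction φ as [P l| |a IHa b IHb|x a IH|t X a IH]; intros v Hg Hv; simpl in *.
  - rewrite Forall_forall in Hg; auto.
  - tauto.
  - destruct Hg. apply in_app_iff in Hv. destruct Hv; eauto.
  - apply filter_In in Hv. destruct Hg. destruct Hv; eauto.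
  - destruct Hg as [Hg _]. rewrite Forall_forall in Hg; auto.
Qed.

Lemma fv_basic φ v : basic φ -> In v (fv φ) -> is_basic_var v.
Proof.
  revert v; induction φ as [P l| |a IHa b IHb|x a IH|t X a IH]; intros v Hg Hv; simpl in *.
  - rewrite Forall_forall in Hg; auto.
  - tauto.
  - destruct Hg. apply in_app_iff in Hv. destruct Hv; eauto.
  - apply filter_In in Hv. destruct Hv; eauto.
  - destruct Hg as [Hg _]. rewrite Forall_forall in Hg; auto.
Qed.

Lemma ren_ext_fv f g φ : (forall v, In v (fv φ) -> f v = g v) -> ren f φ = ren g φ.
Proof.
  revert f g; induction φ as [P l| |a IHa b IHb|x a IH|t X a IH]; intros f g H; simpl in *.
  - f_equal. apply map_ext_in; auto.
  - auto.
  - f_equal; [apply IHa|apply IHb]; intros; apply H; apply in_app_iff; auto.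
  - f_equal. apply IH. intros v Hv. unfold upd.
    destruct (var_eqb v (BV x)) eqn:E; auto. apply H. apply filter_In.
    rewrite E; auto.
  - f_equal. f_equal. apply map_ext_in; auto.
    apply IH. intros v _. destruct (inb v X) eqn:E; auto. apply H. apply inb_In; auto.
Qed.

Lemma ren_ok_ext_fv f g φ : (forall v, In v (fv φ) -> f v = g v) -> ren_ok f φ -> ren_ok g φ.
Proof.
  revert f g; induction φ as [P l| |a IHa b IHb|x a IH|t X a IH]; intros f g H Hok; simpl in *.
  - auto.
  - auto.
  - destruct Hok; split; [apply (IHa f g)|apply (IHb f g)]; auto; intros; apply H; apply in_app_iff; auto.
  - destruct Hok as [Hok1 Hok2]. split.
    + eapply IH; [|exact Hok1]. intros v Hv. unfold upd.
      destruct (var_eqb v (BV x)) eqn:E; auto. apply H. apply filter_In.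
      rewrite E; auto.
    + intros v Hv. rewrite <- H; auto.
  - destruct Hok as [Hok1 Hok2]. split.
    + eapply IH; [|exact Hok1]. intros v _. simpl. destruct (inb v X) eqn:E; auto.
      apply H. apply inb_In; auto.
    + intros v w Hv1 Hv2 Hw1 Hw2. rewrite <- H; auto.
Qed.
Definition conj N (f : var -> var) : var -> var := fun v => th N (f (th N v)).

Lemma conj_upd N f x : x < N -> conj N (upd f x) = upd (conj N f) x.
Proof.
  intro Hx. apply functional_extensionality. intro v. unfold conj, upd.
  rewrite var_eqb_th; auto. destruct (var_eqb v (BV x)); auto. apply th_inv.
Qed.

Lemma conj_inner N f X :
  conj N (fun v => if inb v X then f v else v) =
  (fun v => if inb v (sortset (map (th N) X)) then conj N f v else v).
Proof.
  apply functional_extensionality. intro v. unfold conj. rewrite inb_Thset.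
  destruct (inb (th N v) X); auto. apply th_inv.
Qed.

Lemma Thset_map N f X :
  sortset (map (th N) (sortset (map f X))) =
  sortset (map (conj N f) (sortset (map (th N) X))).
Proof.
  apply sortset_eq. intro v. rewrite in_map_th, In_sortset, !in_map_iff. split.
  - intros [x [Hx1 Hx2]]. exists (th N x). split.
    + unfold conj. rewrite th_inv, Hx1, th_inv; auto.
    + apply in_Thset. rewrite th_inv; auto.
  - intros [y [Hy1 Hy2]]. apply in_Thset in Hy2. exists (th N y). split; auto.
    unfold conj in Hy1. rewrite <- Hy1. rewrite th_inv; auto.
Qed.

Lemma Th_ren N f φ : good N φ -> Th N (ren f φ) = ren (conj N f) (Th N φ).
Proof.
  revert f; induction φ as [P l| |a IHa b IHb|x a IH|t X a IH]; intros f Hg; simpl in *.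
  - f_equal. rewrite !map_map. apply map_ext. intro v. unfold conj. rewrite th_inv; auto.
  - auto.
  - destruct Hg. f_equal; auto.
  - destruct Hg. f_equal. rewrite IH; auto. rewrite conj_upd; auto.
  - destruct Hg. f_equal. apply Thset_map. rewrite IH; auto. rewrite conj_inner; auto.
Qed.

Lemma ren_ok_Th N f φ : good N φ -> ren_ok f φ -> ren_ok (conj N f) (Th N φ).
Proof.
  revert f; induction φ as [P l| |a IHa b IHb|x a IH|t X a IH]; intros f Hg Hok; simpl in *.
  - auto.
  - auto.
  - destruct Hg, Hok; split; auto.
  - destruct Hg as [Hx Hg], Hok as [Hok1 Hok2]. split.
    + rewrite <- conj_upd; auto.
    + intros v Hv Heq. assert (Hv' : In v (fv (Th N (All x a)))) by exact Hv.
      apply fv_Th in Hv'; [|simpl; auto]. apply (Hok2 _ Hv').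
      unfold conj in Heq. apply th_eq in Heq. rewrite th_BV in Heq; auto.
  - destruct Hg as [HX Hg], Hok as [Hok1 Hok2]. split.
    + rewrite <- conj_inner; auto.
    + intros v w Hv1 Hv2 Hw1 Hw2 Heq. apply in_Thset in Hv1.
      apply (fv_Th N a v Hg) in Hv2. apply (fv_Th N a w Hg) in Hw1.
      rewrite in_Thset in Hw2.
      apply (Hok2 _ _ Hv1 Hv2 Hw1 Hw2). unfold conj in Heq. apply th_eq in Heq; auto.
Qed.

Lemma peval_Th N val φ : peval val (Th N φ) = peval (fun ψ => val (Th N ψ)) φ.
Proof.
  induction φ; simpl; auto. rewrite IHφ1, IHφ2; auto.
Qed.

Lemma vins_Th N y X :
  sortset (map (th N) (vins y X)) = vins (th N y) (sortset (map (th N) X)).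
Proof.
  apply sorted_unique. apply sortset_sorted. apply vins_sorted, sortset_sorted.
  intro v. rewrite in_Thset, !In_vins, in_Thset, th_eq. tauto.
Qed.

Lemma conj_sub1 N x y : x < N -> conj N (sub1 x y) = sub1 x (th N y).
Proof.
  intro Hx. apply functional_extensionality. intro v. unfold conj, sub1.
  rewrite var_eqb_th; auto. destruct (var_eqb v (BV x)); auto. apply th_inv.
Qed.

Lemma axiom_Th N φ : good N φ -> axiom φ -> axiom (Th N φ).
Proof.
  intros Hg Hax. destruct Hax; simpl in *.
  - apply ax_taut. intro val. unfold taut in H. rewrite peval_Th; auto.
  - destruct Hg as [[Hx Hg] _]. rewrite Th_ren; auto. rewrite conj_sub1; auto.
    apply ax_inst. rewrite <- conj_sub1; auto. apply ren_ok_Th; auto.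
  - destruct Hg as [[Hx [Hg1 Hg2]] _]. apply ax_allimp.
    rewrite fv_Th; auto. rewrite th_BV; auto.
  - destruct Hg as [[_ Hg] _]. rewrite vins_Th. apply ax_A2.
    + rewrite in_Thset, th_inv; auto.
    + rewrite fv_Th, th_inv; auto.
  - destruct Hg as [[_ Hg] _]. rewrite vins_Th. apply ax_A3.
    rewrite in_Thset, th_inv; auto.
  - apply ax_B1.
  - apply ax_B2.
  - apply ax_B3l.
  - apply ax_B3r.
  - apply ax_B4.
  - destruct Hg as [_ [_ [Hx _]]]. apply ax_B5. rewrite in_Thset, th_BV; auto.
  - destruct Hg as [[Hx _] _]. rewrite vins_Th, th_BV; auto. apply ax_Bb.
    rewrite in_Thset, th_BV; auto.
Qed.

Lemma th_basic N v : bnd N v -> is_basic_var (th N v).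
Proof. destruct v; simpl; auto. intro H. apply Nat.ltb_lt in H. rewrite H; simpl; auto. Qed.

Lemma FmlJ_Th N φ : good N φ -> FmlJ (Th N φ).
Proof.
  unfold FmlJ. induction φ as [P l| |a IHa b IHb|x a IH|t X a IH]; intros Hg; simpl in *.
  - split; auto. rewrite Forall_forall in *. intros v Hv. apply in_map_th in Hv.
    rewrite <- (th_inv N v). apply th_basic; auto.
  - auto.
  - destruct Hg. destruct IHa, IHb; auto.
  - destruct Hg. destruct IH; auto.
  - destruct Hg as [HX Hg]. destruct IH; auto. split; split; auto.
    + apply StronglySorted_Sorted, sortset_sorted.
    + rewrite Forall_forall in *. intros v Hv. apply in_Thset in Hv.
      rewrite <- (th_inv N v). apply th_basic; auto.
Qed.

Lemma th_fix N v : bnd N v -> is_basic_var v -> th N v = v.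
Proof. destruct v; simpl; try tauto. intros H _. apply Nat.ltb_lt in H. rewrite H; auto. Qed.

Lemma map_th_fix N l : Forall (bnd N) l -> Forall is_basic_var l -> map (th N) l = l.
Proof.
  induction l; simpl; auto. intros H1 H2. inversion H1; inversion H2; subst.
  f_equal; auto. apply th_fix; auto.
Qed.

Lemma Th_id N φ : good N φ -> wf φ -> basic φ -> Th N φ = φ.
Proof.
  induction φ as [P l| |a IHa b IHb|x a IH|t X a IH]; intros Hg Hw Hb; simpl in *.
  - f_equal. apply map_th_fix; auto.
  - auto.
  - destruct Hg, Hw, Hb. f_equal; auto.
  - destruct Hg. f_equal; auto.
  - destruct Hg, Hw, Hb. f_equal; auto. rewrite map_th_fix; auto. apply wfset_sortset; auto.
Qed.

Lemma bnd_mono N M v : N <= M -> bnd N v -> bnd M v.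
Proof. destruct v; simpl; auto. lia. Qed.

Lemma good_mono N M φ : N <= M -> good N φ -> good M φ.
Proof.
  intro HNM. induction φ; simpl; intros; try tauto.
  - eapply Forall_impl; [|eauto]. intros; eapply bnd_mono; eauto.
  - destruct H; split; auto. lia.
  - destruct H; split; auto. eapply Forall_impl; [|eauto]. intros; eapply bnd_mono; eauto.
Qed.

Lemma list_ex (l : list var) : exists N, Forall (bnd N) l.
Proof.
  induction l as [|v l [N HN]].
  - exists 0; auto.
  - destruct v as [n|n].
    + exists (max N (S n)). constructor. simpl; lia.
      eapply Forall_impl; [|eauto]. intros; eapply bnd_mono; [|eauto]; lia.
    + exists N. constructor; simpl; auto.
Qed.

Lemma good_ex φ : exists N, good N φ.
Proof.
  induction φ; simpl.
  - apply list_ex.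
  - exists 0; auto.
  - destruct IHφ1 as [N1 H1], IHφ2 as [N2 H2]. exists (max N1 N2).
    split; [apply (good_mono N1)|apply (good_mono N2)]; auto; lia.
  - destruct IHφ as [N1 H1]. exists (max N1 (S x)). split. lia. apply (good_mono N1); auto; lia.
  - destruct IHφ as [N1 H1]. destruct (list_ex X) as [N2 H2]. exists (max N1 N2).
    split. eapply Forall_impl; [|eauto]. intros; eapply bnd_mono; [|eauto]; lia.
    apply (good_mono N1); auto; lia.
Qed.
Fixpoint findm (P : nat -> bool) (τ : nat -> nat) (i k : nat) : option nat :=
  match i with
  | 0 => None
  | S i' => if P i' && Nat.eqb (τ i') k then Some i' else findm P τ i' k
  end.

Lemma findm_some P τ i k m : findm P τ i k = Some m -> m < i /\ P m = true /\ τ m = k.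
Proof.
  induction i; simpl; [discriminate|].
  destruct (P i && Nat.eqb (τ i) k) eqn:E.
  - intro H; inversion H; subst. apply andb_true_iff in E. destruct E as [E1 E2].
    apply Nat.eqb_eq in E2. auto.
  - intro H. destruct (IHi H) as [? [? ?]]. split; auto.
Qed.

Lemma findm_none P τ i k : findm P τ i k = None -> forall m, m < i -> P m = true -> τ m <> k.
Proof.
  induction i; simpl; [lia|].
  destruct (P i && Nat.eqb (τ i) k) eqn:E; [discriminate|].
  intros H m Hm HP Ht. destruct (Nat.eq_dec m i).
  - subst. rewrite HP in E. simpl in E. apply Nat.eqb_neq in E. auto.
  - apply (IHi H m); auto. lia.
Qed.

Definition sig (N : nat) (P : nat -> bool) (τ : nat -> nat) (n : nat) : nat :=
  if Nat.ltb n N then (if P n then N + τ n else n)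
  else match findm P τ N (n - N) with Some m => m | None => n end.

Lemma sig_inv N P τ (Hinj : forall m n, τ m = τ n -> m = n) n :
  sig N P τ (sig N P τ n) = n.
Proof.
  unfold sig at 2. destruct (Nat.ltb n N) eqn:E.
  - apply Nat.ltb_lt in E. destruct (P n) eqn:EP.
    + unfold sig. destruct (Nat.ltb (N + τ n) N) eqn:E2. apply Nat.ltb_lt in E2; lia.
      replace (N + τ n - N) with (τ n) by lia.
      destruct (findm P τ N (τ n)) eqn:F.
      * apply findm_some in F. destruct F as [_ [_ F]]. auto.
      * exfalso. eapply findm_none; eauto.
    + unfold sig. apply Nat.ltb_lt in E. rewrite E, EP; auto.
  - apply Nat.ltb_ge in E. destruct (findm P τ N (n - N)) eqn:F.
    + destruct (findm_some _ _ _ _ _ F) as [H1 [H2 H3]]. unfold sig.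
      apply Nat.ltb_lt in H1. rewrite H1, H2. lia.
    + unfold sig. apply Nat.ltb_ge in E. rewrite E, F; auto.
Qed.

Section Main.
Variable CS : nat -> form -> Prop.
Hypothesis HCS : is_CS CS.
Hypothesis Hvc : variant_closed CS.

Lemma cs_case c ψ : CSV CS c ψ -> (exists N0, forall N, N0 <= N -> good N ψ /\ CS c (Th N ψ)).
Proof.
  intros [φ0 [P [τ [Hcs [Hinj [Hok Heq]]]]]].
  destruct (good_ex φ0) as [N1 H1]. destruct (good_ex ψ) as [N2 H2].
  exists (max N1 N2). intros M HM.
  assert (G1 : good M φ0) by (apply (good_mono N1); auto; lia).
  assert (G2 : good M ψ) by (apply (good_mono N2); auto; lia).
  split; auto.
  destruct (HCS _ _ Hcs) as [[Hwf Hbas] _].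
  assert (Hid : Th M φ0 = φ0) by (apply Th_id; auto).
  assert (Hagr : forall v, In v (fv φ0) -> conj M (wit_ren P τ) v = lift_ren (sig M P τ) v).
  { intros v Hv. pose proof (fv_bnd _ _ _ G1 Hv) as Hb. pose proof (fv_basic _ _ Hbas Hv) as Hb2.
    destruct v as [n|n]; simpl in *; [|tauto].
    unfold conj, sig. simpl. apply Nat.ltb_lt in Hb. rewrite Hb. simpl.
    destruct (P n); simpl; auto.
    destruct (Nat.ltb (M + τ n) M) eqn:E. apply Nat.ltb_lt in E; lia. auto.
    rewrite Hb; auto. }
  apply (Hvc c φ0 (Th M ψ)); auto.
  exists (sig M P τ). split.
  - exists (sig M P τ). split; intro; apply sig_inv; auto.
  - split.
    + apply (ren_ok_ext_fv (conj M (wit_ren P τ))); auto.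
      rewrite <- Hid. apply ren_ok_Th; auto.
    + subst ψ. rewrite Th_ren; auto. rewrite Hid. apply ren_ext_fv; auto.
Qed.

Lemma main_ind φ : prov FmlJV (CSV CS) φ ->
  exists N0, forall N, N0 <= N -> good N φ /\ prov FmlJ CS (Th N φ).
Proof.
  induction 1.
  - destruct (good_ex φ) as [N0 HN0]. exists N0. intros N HN.
    assert (G : good N φ) by (apply (good_mono N0); auto).
    split; auto. apply pr_ax. apply FmlJ_Th; auto. apply axiom_Th; auto.
  - destruct (cs_case c ψ H) as [N0 HN0]. exists N0. intros N HN.
    destruct (HN0 N HN) as [G Hc]. split. simpl; auto.
    simpl. apply pr_cs; auto. apply (FmlJ_Th N (cs_formula c ψ)). simpl; auto.
  - destruct IHprov1 as [N1 H1], IHprov2 as [N2 H2]. exists (max N1 N2). intros N HN.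
    destruct (H1 N) as [G1 P1]. lia. destruct (H2 N) as [G2 P2]. lia.
    split. destruct G1; auto. simpl in P1. eapply pr_mp; eauto.
  - destruct IHprov as [N1 H1]. exists (max N1 (S x)). intros N HN.
    destruct (H1 N) as [G1 P1]. lia. split. simpl; split; auto; lia.
    simpl. apply pr_gen; auto.
Qed.

End Main.

Theorem mainTheorem9 (CS : nat -> form -> Prop)
  (HCS : is_CS CS) (Hvc : variant_closed CS)
  (φ : form) (Hφ : FmlJ φ) :
  provCSV CS φ -> provCS CS φ.
Proof.
  intro H. destruct (main_ind CS HCS Hvc φ H) as [N0 HN0].
  destruct (good_ex φ) as [N1 HN1].
  destruct (HN0 (max N0 N1)) as [G Hp]. lia.
  destruct Hφ as [Hw Hb]. rewrite Th_id in Hp; auto.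
Qed.
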